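(* Let $p \geq 4$ and let $L$ be the Laplacian of the graph $C_\infty \oplus K_p \oplus C_\infty$. Then there exists a linear subspace $E_K \subset l^2$ of dimension $p-3$ such that every $v \in E_K$ satisfies $Lv = pv$ and $v_j = 0$ for all $j \notin \{-p+2,\ldots,-1\}$.
   Context: For an integer $p \geq 3$, the graph $C_\infty \oplus K_p \oplus C_\infty$ has vertex set $\mathbb{Z}$; its edges are every pair of distinct vertices in $\{-p+1,\ldots,0\}$, the edges $\{j,j+1\}$ for all $j \leq -p$, and the edges $\{j,j+1\}$ for all $j \geq 0$. $l^2$ is the real Hilbert space of square-summable real sequences indexed by $\mathbb{Z}$. The Laplacian acts by $(Lv)_i = \deg(i)\, v_i - \sum_{j \sim i} v_j$. *)

(* Defs.v *)
From mathcomp Require Import all_boot all_order all_algebra.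
From mathcomp Require Import reals.
Set Implicit Arguments. Unset Strict Implicit. Unset Printing Implicit Defensive.
Import Order.TTheory GRing.Theory Num.Theory.
Local Open Scope ring_scope.

(* Edge relation of C_oo (+) K_p (+) C_oo on vertex set Z. *)
Definition adj (p : nat) (i j : int) : bool :=
  [|| [&& (- (p%:Z) + 1 <= i <= 0), (- (p%:Z) + 1 <= j <= 0) & i != j],
      [&& (j == i + 1) || (i == j + 1) & Num.min i j <= - (p%:Z)] |
      [&& (j == i + 1) || (i == j + 1) & 0 <= Num.min i j]].

(* All neighbours of i lie in the window {i-p, ..., i+p}. *)
Definition win (p : nat) (i : int) (k : 'I_(2 * p + 1)) : int := i - p%:Z + (k : nat)%:Z.

Arguments win : clear implicits.

Definition deg {R : realType} (p : nat) (i : int) : R :=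
  \sum_(k < 2 * p + 1 | adj p i (win p i k)) 1.

Definition Lap {R : realType} (p : nat) (v : int -> R) (i : int) : R :=
  deg p i * v i - \sum_(k < 2 * p + 1 | adj p i (win p i k)) v (win p i k).

Definition in_l2 {R : realType} (v : int -> R) : Prop :=
  exists M : R, forall N : nat, \sum_(k < 2 * N + 1) v ((k : nat)%:Z - N%:Z) ^+ 2 <= M.

Definition subspace_of_dim {R : realType} (E : (int -> R) -> Prop) (n : nat) : Prop :=
  exists b : 'I_n -> (int -> R),
    (forall c : 'I_n -> R, (forall j, \sum_(i < n) c i * b i j = 0) -> forall i, c i = 0) /\
    (forall v, E v <-> exists c : 'I_n -> R, forall j, v j = \sum_(i < n) c i * b i j).

(* Main.v *)
Require Import Defs.
From mathcomp Require Import all_boot all_order all_algebra.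
From mathcomp Require Import reals zify.
Import Order.TTheory GRing.Theory Num.Theory.
Local Open Scope ring_scope.
Set Implicit Arguments. Unset Strict Implicit.

Definition cl (p : nat) (m : 'I_p) : int := - (p%:Z) + 1 + (m : nat)%:Z.
Arguments cl {p}.

Lemma cl_inj p : injective (@cl p).
Proof. move=> m1 m2; rewrite /cl => h; apply: val_inj => /=; lia. Qed.

Lemma ord_int n (x : int) : 0 <= x -> x < n%:Z -> exists k : 'I_n, x = (k : nat)%:Z.
Proof.
move=> h0 h1; have hk : (absz x < n)%N by lia.
exists (Ordinal hk) => /=; lia.
Qed.

Lemma ord_of p (j : int) : - (p%:Z) + 1 <= j <= 0 -> exists m : 'I_p, j = cl m.
Proof.
move=> hj; have h0 : 0 <= j + p%:Z - 1 by lia.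
have h1 : j + p%:Z - 1 < p%:Z by lia.
have [k hk] := ord_int h0 h1.
exists k; rewrite /cl; lia.
Qed.

Lemma delta_eq {R : realType} n (f : 'I_n -> int) (finj : injective f) k0 :
  \sum_(k < n) ((f k == f k0)%:R : R) = 1.
Proof.
rewrite (bigD1 k0) //= eqxx big1 ?addr0 // => k hk.
by rewrite (inj_eq finj) (negbTE hk).
Qed.

Lemma delta_le {R : realType} n (f : 'I_n -> int) (finj : injective f) a :
  \sum_(k < n) ((f k == a)%:R : R) <= 1.
Proof.
case: (pickP (fun k => f k == a)) => [k0 /eqP <-| H].
  by rewrite delta_eq.
by rewrite big1 // => k _; rewrite H.
Qed.

Lemma expand {R : realType} p (G : int -> R)
  (supp : forall j, G j != 0 -> - (p%:Z) + 1 <= j <= 0) j :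
  G j = \sum_(m < p) (j == cl m)%:R * G (cl m).
Proof.
case: (boolP (- (p%:Z) + 1 <= j <= 0)) => hj.
  have [m0 ->] := ord_of hj.
  rewrite (bigD1 m0) //= eqxx mul1r big1 ?addr0 // => m hm.
  by rewrite eq_sym (inj_eq (@cl_inj p)) (negbTE hm) mul0r.
have G0 : G j = 0 by apply/eqP; apply: contraNT hj => /supp.
rewrite G0 big1 // => m _.
rewrite (_ : (j == cl m) = false) ?mul0r //.
apply/negbTE; apply: contraNN hj => /eqP ->; have := ltn_ord m; rewrite /cl; lia.
Qed.

Lemma win_inj p i : injective (win p i).
Proof. move=> k1 k2; rewrite /win => h; apply: val_inj => /=; lia. Qed.

Lemma window {R : realType} p i (G : int -> R)
  (supp : forall j, G j != 0 -> - (p%:Z) + 1 <= j <= 0)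
  (hi : - (p%:Z) + 1 <= i <= 0) :
  \sum_(k < 2 * p + 1) G (win p i k) = \sum_(m < p) G (cl m).
Proof.
under eq_bigr => k _ do rewrite (expand supp (win p i k)).
rewrite exchange_big /=; apply: eq_bigr => m _.
rewrite -big_distrl /=.
have h0 : 0 <= cl m - i + p%:Z by have := ltn_ord m; rewrite /cl; lia.
have h1 : cl m - i + p%:Z < (2 * p + 1)%N%:Z by have := ltn_ord m; rewrite /cl; lia.
have [k0 hk0] := ord_int h0 h1.
have -> : cl m = win p i k0 by rewrite /win; lia.
by rewrite (delta_eq (@win_inj p i)) mul1r.
Qed.

Lemma remove_one {R : realType} p (f : int -> R) i (hi : - (p%:Z) + 1 <= i <= 0) :
  \sum_(m < p) (if cl m != i then f (cl m) else 0) = \sum_(m < p) f (cl m) - f i.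
Proof.
have [m0 ->] := ord_of hi.
rewrite (bigD1 m0) //= eqxx [in RHS](bigD1 m0) //= add0r addrAC subrr add0r.
by apply: eq_bigr => m hm; rewrite (inj_eq (@cl_inj p)) hm.
Qed.

Lemma adj_in p i j : - (p%:Z) + 1 <= i <= 0 -> - (p%:Z) + 1 <= j <= 0 ->
  adj p i j = (j != i).
Proof. rewrite /adj => h1 h2; apply/idP/idP; lia. Qed.

Lemma adj_int p i j : - (p%:Z) + 2 <= i <= -1 -> adj p i j -> - (p%:Z) + 1 <= j <= 0.
Proof. rewrite /adj; lia. Qed.

Lemma adj_out p i j : ~~ (- (p%:Z) + 1 <= i <= 0) -> adj p i j -> ~~ (- (p%:Z) + 2 <= j <= -1).
Proof. rewrite /adj; lia. Qed.

Lemma Lap_eig {R : realType} p (v : int -> R)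
  (supp : forall j, ~~ (- (p%:Z) + 2 <= j <= -1) -> v j = 0)
  (sum0 : \sum_(m < p) v (cl m) = 0) i : Lap p v i = p%:R * v i.
Proof.
rewrite /Lap big_mkcond /=.
case: (boolP (- (p%:Z) + 1 <= i <= 0)) => hi.
  rewrite (@window R p i (fun j => if adj p i j then v j else 0)) //; last first.
    move=> j /=; case: ifP => _; last by rewrite eqxx.
    case: (boolP (- (p%:Z) + 2 <= j <= -1)) => hj; first (move=> _; lia).
    by rewrite supp // eqxx.
  transitivity (deg p i * v i - \sum_(m < p) (if cl m != i then v (cl m) else 0)).
    congr (_ - _); apply: eq_bigr => m _; rewrite adj_in //;
      have := ltn_ord m; rewrite /cl; lia.
  rewrite remove_one // sum0 sub0r opprK.
  case: (boolP (- (p%:Z) + 2 <= i <= -1)) => hint; last first.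
    by rewrite (supp i hint) !mulr0 addr0.
  have -> : deg p i = (p%:R - 1 : R).
    rewrite /deg big_mkcond /=.
    rewrite (@window R p i (fun j => if adj p i j then 1 else 0)) //; last first.
      move=> j /=; case: ifP => h; last by rewrite eqxx.
      by move=> _; apply: adj_int h.
    transitivity (\sum_(m < p) (if cl m != i then (fun _ => 1 : R) (cl m) else 0)).
      apply: eq_bigr => m _; rewrite adj_in //;
        have := ltn_ord m; rewrite /cl; lia.
    have := @remove_one R p (fun _ => 1) i hi; rewrite /= => ->.
    by rewrite sumr_const card_ord.
  by rewrite mulrBl mul1r subrK.
rewrite (supp i) ?big1 ?mulr0 ?subr0 //; last lia.
move=> k _; case: ifP => // ha; apply: supp; exact: adj_out ha.
Qed.

Lemma l2 {R : realType} p (v : int -> R)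
  (supp : forall j, ~~ (- (p%:Z) + 2 <= j <= -1) -> v j = 0) : in_l2 v.
Proof.
exists (\sum_(m < p) v (cl m) ^+ 2) => N.
have suppG : forall j, (fun j => v j ^+ 2) j != 0 -> - (p%:Z) + 1 <= j <= 0.
  move=> j /=; case: (boolP (- (p%:Z) + 2 <= j <= -1)) => hj; first (move=> _; lia).
  by rewrite supp // expr0n eqxx.
under eq_bigr => k _ do rewrite (expand suppG).
rewrite exchange_big; apply: ler_sum => m _; rewrite -big_distrl /=.
apply: ler_piMl; first exact: sqr_ge0.
apply: (delta_le (f := fun k : 'I_(2 * N + 1) => (k : nat)%:Z - N%:Z)).
move=> k1 k2 h; apply: val_inj => /=; lia.
Qed.

Definition sb (p : nat) (i : 'I_(p - 3)) : int := - (p%:Z) + 2 + (i : nat)%:Z.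
Arguments sb {p}.
Definition bb {R : realType} (p : nat) (i : 'I_(p - 3)) (j : int) : R :=
  (j == sb i)%:R - (j == -1)%:R.
Arguments bb {R p}.

Theorem proposition10 (R : realType) (p : nat) (hp : (4 <= p)%N) :
  exists E : (int -> R) -> Prop,
    (forall v, E v -> in_l2 v) /\
    subspace_of_dim E (p - 3) /\
    (forall v, E v ->
       (forall i : int, Lap p v i = p%:R * v i) /\
       (forall j : int, ~ (- (p%:Z) + 2 <= j <= -1) -> v j = 0)).
Proof.
pose E := fun v : int -> R => exists cc : 'I_(p - 3) -> R,
  forall j, v j = \sum_(i < p - 3) cc i * bb i j.
have suppE : forall v, E v -> forall j, ~~ (- (p%:Z) + 2 <= j <= -1) -> v j = 0.
  move=> v [cc H] j hj; rewrite H big1 // => i _; rewrite /bb.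
  have h1 : (j == sb i) = false.
    by apply/negbTE; apply: contraNN hj => /eqP ->; have := ltn_ord i; rewrite /sb; lia.
  have h2 : (j == -1) = false.
    by apply/negbTE; apply: contraNN hj => /eqP ->; lia.
  by rewrite h1 h2 subrr mulr0.
have sumE : forall v, E v -> \sum_(m < p) v (cl m) = 0.
  move=> v [cc H]; under eq_bigr => m _ do rewrite H.
  rewrite exchange_big big1 // => i _; rewrite -big_distrr /=.
  rewrite /bb sumrB.
  have [m1 e1] : exists m1 : 'I_p, sb i = cl m1.
    by apply: ord_of; have := ltn_ord i; rewrite /sb; lia.
  have [m2 e2] : exists m2 : 'I_p, -1 = cl m2 by apply: ord_of; lia.
  under eq_bigr => m _ do rewrite e1.
  under [X in _ - X]eq_bigr => m _ do rewrite e2.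
  by rewrite !(delta_eq (@cl_inj p)) subrr mulr0.
exists E; split; first by move=> v /suppE; apply: l2.
split.
  exists (@bb R p); split; last by move=> v; split.
  move=> cc H i0; move: (H (sb i0)).
  rewrite (bigD1 i0) //= big1; last first.
    move=> i hi; rewrite /bb.
    rewrite (_ : (sb i0 == sb i) = false); last first.
      apply/negbTE; apply: contra hi => /eqP h; apply/eqP; apply: val_inj => /=.
      move: h; rewrite /sb; lia.
    rewrite (_ : (sb i0 == -1) = false) ?subrr ?mulr0 //.
    apply/negbTE; have := ltn_ord i0; rewrite /sb; lia.
  rewrite /bb eqxx (_ : (sb i0 == -1) = false) ?subr0 ?mulr1 ?addr0 //.
  apply/negbTE; have := ltn_ord i0; rewrite /sb; lia.
move=> v hv; split.
  by apply: Lap_eig; [exact: suppE | exact: sumE].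
by move=> j /negP; apply: suppE.
Qed.
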